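(* Let $M\in\mathrm{rep}\,G_{m,n}$ be arbitrary, let $\ast\in\{ss,cc,tot\}$, and let $i,j$ be vertices of $G_{m,n}$ such that there is a path from $i$ to $j$. Then $$\sum_{I\in\mathbb{I}_{m,n}}\tilde d^\ast_M(I)\cdot\operatorname{rank} V_I(i\to j)=\operatorname{rank} M(i\to j).$$
   Context: Fix a field $K$. For integers $m,n\ge1$, $G_{m,n}$ is the equioriented commutative $m\times n$ grid: the quiver with vertex set $\{(i,j):1\le i\le m,\ 1\le j\le n\}$ and arrows $(i,j)\to(i,j+1)$ and $(i,j)\to(i+1,j)$, bound by all commutativity relations; $\mathrm{rep}\,G_{m,n}$ is its category of finite-dimensional representations over $K$ satisfying the relations. For vertices $s,t$ with a path from $s$ to $t$, $M(s\to t)$ is the composite linear map along any such path (identity if $s=t$). An interval of $G_{m,n}$ is a nonempty full subquiver $I$ which is connected (as an undirected graph) and convex (whenever $x,y\in I_0$ and there are paths $x\to z$, $z\to y$ in $G_{m,n}$, then $z\in I_0$); $\mathbb{I}_{m,n}$ is the set of intervals ordered by inclusion of vertex sets. The interval representation $V_I$ has $K$ at vertices of $I$, $0$ elsewhere, identity maps on arrows inside $I$ and zero maps otherwise. Essential vertices: $I^{ss}_0$ is the set of sources and sinks of the quiver $I$; $I^{cc}_0=I_0\cap(\mathrm{pr}_1(I^{ss}_0)\times\mathrm{pr}_2(I^{ss}_0))$ with $\mathrm{pr}_1,\mathrm{pr}_2$ coordinate projections; $I^{tot}_0=I_0$. Let $KG_{m,n}$ be the $K$-linear category whose objects are the vertices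 and whose morphisms are $K$-linear combinations of paths modulo the commutativity relations; representations are $K$-linear functors $KG_{m,n}\to\mathrm{vect}_K$. For $\ast\in\{ss,cc,tot\}$, $\mathcal{C}^\ast_I$ is the full subcategory of $KG_{m,n}$ on $I^\ast_0$, and $M^\ast_I:=M|_{\mathcal{C}^\ast_I}$. The compressed multiplicity $\bar d^\ast_M(I)$ is the multiplicity of the indecomposable $(V_I)^\ast_I$ as a direct summand of $M^\ast_I$. Let $\mu$ be the Möbius function of the finite poset $\mathbb{I}_{m,n}$ ($\mu([I,I])=1$, $\mu([I,J])=-\sum_{I\le L<J}\mu([I,L])$ for $I<J$), and $\tilde d^\ast_M(I):=\sum_{J\ge I}\mu([I,J])\,\bar d^\ast_M(J)$. *)

(* Defs.v *)
From HB Require Import structures.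
From mathcomp Require Import all_boot all_order all_algebra.
From Stdlib Require Import ClassicalEpsilon.
Set Implicit Arguments. Unset Strict Implicit. Unset Printing Implicit Defensive.
Import Order.TTheory GRing.Theory Num.Theory.
Local Open Scope ring_scope.

(* Vertices of the grid G_{m,n}: pairs (i,j), 0-indexed: 'I_m * 'I_n. *)
Definition gvert (m n : nat) : finType := ('I_m * 'I_n)%type.

(* There is a path x -> y in G_{m,n} iff x <= y componentwise. *)
Definition gle m n (x y : gvert m n) : bool :=
  ((x.1 : nat) <= y.1)%N && ((x.2 : nat) <= y.2)%N.

Definition garr m n (x y : gvert m n) : bool :=
  (((x.1 : nat) == y.1) && ((y.2 : nat) == (x.2).+1)) ||
  (((x.2 : nat) == y.2) && ((y.1 : nat) == (x.1).+1)).

(* Representations of G_{m,n}, as K-linear functors KG_{m,n} -> vect_K.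
   Hom(x,y) in KG_{m,n} is K (spanned by the path class) if x <= y, and 0
   otherwise, so a functor is given by spaces K^(dim x) and the images
   mor x y = M(x -> y) of path classes, functorially.  Row-vector
   convention: the composite x -> y -> z is  mor x y *m mor y z. *)
Record rep (K : fieldType) (m n : nat) := Rep {
  rdim : gvert m n -> nat;
  rmor : forall x y : gvert m n, 'M[K]_(rdim x, rdim y);
  rmor_id : forall x, rmor x x = (1%:M)%R;
  rmor_comp : forall x y z, gle x y -> gle y z ->
                rmor x z = rmor x y *m rmor y z;
  rmor0 : forall x y, ~~ gle x y -> rmor x y = 0%R
}.

Definition is_interval m n (I : {set gvert m n}) : bool :=
  [&& I != set0,
      [forall x in I, forall y in I,
         connect (fun a b => [&& a \in I, b \in I & garr a b || garr b a]) x y]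
    & [forall x in I, forall y in I, forall z,
         (gle x z && gle z y) ==> (z \in I)]].

Inductive ess := SS | CC | TOT.

Definition sources m n (I : {set gvert m n}) : {set gvert m n} :=
  [set x in I | [forall y in I, ~~ garr y x]].
Definition sinks m n (I : {set gvert m n}) : {set gvert m n} :=
  [set x in I | [forall y in I, ~~ garr x y]].
Definition ess_ss m n (I : {set gvert m n}) := sources I :|: sinks I.
Definition ess_cc m n (I : {set gvert m n}) : {set gvert m n} :=
  [set x in I | [exists a in ess_ss I, exists b in ess_ss I,
                   (x.1 == a.1) && (x.2 == b.2)]].
Definition ess_set m n (s : ess) (I : {set gvert m n}) : {set gvert m n} :=
  match s with SS => ess_ss I | CC => ess_cc I | TOT => I end.

(* (V_I)^*_I is K at every vertex of S = I^*_0 with identity maps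
   V_I(x -> y) = 1 for x <= y in S.  (V_I)^k is a direct summand of M^*_I
   iff there is a split monomorphism (V_I^*_I)^k -> M^*_I, i.e. natural
   families phi : (V_I^*_I)^k -> M^*_I, psi : M^*_I -> (V_I^*_I)^k with
   psi o phi = id. *)
Definition splits_k (K : fieldType) m n (M : rep K m n)
    (S : {set gvert m n}) (k : nat) : Prop :=
  exists (phi : forall x, 'M[K]_(k, rdim M x))
         (psi : forall x, 'M[K]_(rdim M x, k)),
    (forall x y, x \in S -> y \in S -> gle x y ->
       phi y = phi x *m rmor M x y /\ rmor M x y *m psi y = psi x) /\
    (forall x, x \in S -> phi x *m psi x = (1%:M)%R).

Definition pbool (P : Prop) : bool :=
  if excluded_middle_informative P then true else false.

(* Compressed multiplicity: the multiplicity of (V_I)^*_I as a direct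
   summand of M^*_I, i.e. the largest k with ((V_I)^*_I)^k a direct summand
   (well-defined by Krull-Schmidt; k is bounded by the total dimension). *)
Definition dbar (K : fieldType) m n (M : rep K m n) (s : ess)
    (I : {set gvert m n}) : nat :=
  \max_(k < (\sum_(x : gvert m n) rdim M x).+1
          | pbool (splits_k M (ess_set s I) k)) (k : nat).

(* Moebius function of the poset of intervals ordered by inclusion,
   mu(I,I) = 1, mu(I,J) = - sum_{I <= L < J} mu(I,L); computed with fuel. *)
Fixpoint mu_rec m n (k : nat) (I J : {set gvert m n}) : int :=
  match k with
  | 0 => 0%R
  | k'.+1 =>
      if I == J then 1%R
      else if I \proper J then
        (- \sum_(L : {set gvert m n} | [&& is_interval L, I \subset L
                                          & L \proper J]) mu_rec k' I L)%R
      else 0%R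
  end.
Definition mobius m n (I J : {set gvert m n}) : int := mu_rec #|J|.+1 I J.

Definition dtilde (K : fieldType) m n (M : rep K m n) (s : ess)
    (I : {set gvert m n}) : int :=
  (\sum_(J : {set gvert m n} | is_interval J && (I \subset J))
      mobius I J * (dbar M s J)%:Z)%R.

(* The interval representation V_I: K at vertices of I, 0 elsewhere;
   V_I(x -> y) is the identity when x, y in I, x <= y (the path lies in I by
   convexity), and zero otherwise. *)
Definition VImx (K : fieldType) m n (I : {set gvert m n}) (x y : gvert m n)
  : 'M[K]_(x \in I : nat, y \in I : nat) :=
  \matrix_(a, b) (if gle x y then 1 else 0)%R.

(* Main.v *)
Require Import Defs.
From HB Require Import structures.
From mathcomp Require Import all_boot all_order all_algebra zify.
From Stdlib Require Import ClassicalEpsilon.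
Import Order.TTheory GRing.Theory Num.Theory.
Set Implicit Arguments. Unset Strict Implicit. Unset Printing Implicit Defensive.
Local Open Scope ring_scope.

Section Mob.
Variables m n : nat.
Implicit Types I J L S : {set gvert m n}.

Lemma mu_fuel k1 k2 I J : (#|J| < k1)%N -> (#|J| < k2)%N ->
  mu_rec k1 I J = mu_rec k2 I J.
Proof.
elim: k1 k2 J => [|k1 IH] [|k2] J //= h1 h2.
case: (I == J) => //; case: (I \proper J) => //.
congr (- _); apply: eq_bigr => L /and3P[_ _ pLJ].
have := proper_card pLJ => c.
by apply: IH; apply: leq_trans c _.
Qed.

Lemma mobiusE I J : mobius I J =
  if I == J then 1 else if I \proper J then
   - \sum_(L | [&& is_interval L, I \subset L & L \proper J]) mobius I L
  else 0.
Proof.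
rewrite {1}/mobius [LHS]/=; case: (I == J) => //; case: (I \proper J) => //.
congr (- _); apply: eq_bigr => L /and3P[_ _ pLJ].
have := proper_card pLJ => c.
rewrite /mobius; apply: mu_fuel => //; apply: leq_trans c _.
Qed.

Lemma mobius0 I J : ~~ (I \subset J) -> mobius I J = 0.
Proof.
move=> h; rewrite mobiusE; case: eqP => [e|_]; first by rewrite e subxx in h.
by case: ifP => // /proper_sub; rewrite (negbTE h).
Qed.

Lemma mobius_left I J : is_interval I -> is_interval J ->
  \sum_(L | is_interval L) (if L \subset J then mobius I L else 0)
  = (I == J)%:R.
Proof.
move=> iI iJ.
have drop : forall L, ~~ (I \subset L) -> mobius I L = 0 by move=> L; exact: mobius0.
case: eqP => [<-|nIJ].
  rewrite (bigD1 I) //= subxx mobiusE eqxx big1 ?addr0 // => L /andP[_ nL].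
  case: ifP => // LI; apply: drop; apply/negP => IL.
  by move: nL; rewrite eq_sym eqEsubset IL LI.
case sIJ: (I \subset J); last first.
  rewrite big1 // => L _; case: ifP => // LJ; apply: drop; apply/negP => IL.
  by rewrite (subset_trans IL LJ) in sIJ.
have pIJ : I \proper J by rewrite properEneq sIJ andbT; apply/eqP.
rewrite (bigD1 J) //= subxx.
rewrite [mobius I J]mobiusE ifN_eq ?pIJ; last by apply/eqP.
rewrite [X in _ + X](_ : _ = \sum_(L | [&& is_interval L, I \subset L & L \proper J]) mobius I L) ?addNr //.
rewrite big_mkcond [RHS]big_mkcond; apply: eq_bigr => L _ /=.
rewrite properEneq; case: (is_interval L) => //=.
case: (L =P J) => [->|_] /=; first by rewrite andbF.
case: (L \subset J); rewrite ?andbT ?andbF //; case IL: (I \subset L) => //; rewrite drop ?IL //.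
Qed.

Definition iset : {pred {set gvert m n}} := [pred L | is_interval L].

Lemma sum_iset (F : {set gvert m n} -> int) :
  \sum_(c < #|iset|) F (enum_val c) = \sum_(L | is_interval L) F L.
Proof. by rewrite -(big_enum_val (A := iset)). Qed.

Lemma mobius_right S J : is_interval S -> is_interval J ->
  \sum_(L | is_interval L) (if S \subset L then mobius L J else 0)
  = (S == J)%:R.
Proof.
move=> iS iJ.
pose ev := @enum_val _ iset.
pose Z : 'M[int]_#|iset| := \matrix_(a, b) (if ev a \subset ev b then 1 else 0).
pose Mu : 'M[int]_#|iset| := \matrix_(a, b) mobius (ev a) (ev b).
have h1 : Mu *m Z = 1%:M.
  apply/matrixP => a b; rewrite !mxE.
  under eq_bigr do rewrite !mxE.
  rewrite (sum_iset (fun L => mobius (enum_val a) L * (if L \subset enum_val b then 1 else 0))).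
  rewrite -(inj_eq enum_val_inj) -(mobius_left (enum_valP a) (enum_valP b)).
  by apply: eq_bigr => L _; case: ifP; rewrite ?mulr1 ?mulr0.
have h2 := mulmx1C h1.
have SA : S \in iset by [].
have JA : J \in iset by [].
move/matrixP: h2 => /(_ (enum_rank_in SA S) (enum_rank_in SA J)).
rewrite !mxE.
have -> : (enum_rank_in SA S == enum_rank_in SA J) = (S == J).
  apply/eqP/eqP => [e|e]; [exact: (can_in_inj (enum_rankK_in SA) SA JA e)|exact: (congr1 (enum_rank_in SA) e)].
under eq_bigr do rewrite !mxE.
rewrite /ev !enum_rankK_in //.
rewrite (sum_iset (fun L => (if S \subset L then 1 else 0) * mobius L J)) => <-.
by apply: eq_bigr => L _; case: ifP; rewrite ?mul1r ?mul0r.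
Qed.
End Mob.
Section Split.
Variables (K : fieldType) (m n : nat) (M : rep K m n).

Lemma split_upper (E : {set gvert m n}) (i j : gvert m n) k :
  i \in E -> j \in E -> gle i j -> splits_k M E k -> (k <= \rank (rmor M i j))%N.
Proof.
move=> iE jE ij [phi [psi [H1 H2]]].
have e : phi i *m rmor M i j *m psi j = 1%:M.
  by have [<- _] := H1 i j iE jE ij; exact: H2.
rewrite -[k](mxrank1 K) -e.
exact: leq_trans (mxrankM_maxl _ _) (mxrankM_maxr _ _).
Qed.

Lemma split_lower (E : {set gvert m n}) (i j : gvert m n) :
  gle i j -> (forall x, x \in E -> gle i x && gle x j) ->
  splits_k M E (\rank (rmor M i j)).
Proof.
move=> ij hE.
set A := rmor M i j; set r := \rank A.
pose phi0 : 'M[K]_(r, rdim M i) := pid_mx r *m invmx (col_ebase A).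
pose psi0 : 'M[K]_(rdim M j, r) := invmx (row_ebase A) *m pid_mx r.
have key : phi0 *m A *m psi0 = 1%:M.
  rewrite /phi0 /psi0 -{2}(mulmx_ebase A).
  rewrite !mulmxA mulmxKV ?col_ebase_unit //.
  rewrite mulmxK ?row_ebase_unit // -/r.
  rewrite (@pid_mx_id K r (rdim M i) (rdim M j) r (rank_leq_row A)).
  rewrite (@pid_mx_id K r (rdim M j) r r (rank_leq_col A)).
  exact: pid_mx_1.
exists (fun x => phi0 *m rmor M i x), (fun x => rmor M x j *m psi0); split.
  move=> x y xE yE xy; have /andP[ix xj] := hE x xE; have /andP[iy yj] := hE y yE.
  by rewrite -mulmxA -rmor_comp // mulmxA -rmor_comp.
move=> x xE; have /andP[ix xj] := hE x xE.
by rewrite mulmxA -(mulmxA phi0) -rmor_comp.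
Qed.

Lemma dbar_eq (s : ess) (S : {set gvert m n}) (i j : gvert m n) :
  gle i j -> i \in ess_set s S -> j \in ess_set s S ->
  (forall x, x \in ess_set s S -> gle i x && gle x j) ->
  dbar M s S = \rank (rmor M i j).
Proof.
move=> ij iE jE hE; rewrite /dbar.
have rlt : (\rank (rmor M i j) < (\sum_(x : gvert m n) rdim M x).+1)%N.
  rewrite ltnS (leq_trans (rank_leq_row _)) //.
  by rewrite (bigD1 i) //= leq_addr.
apply/eqP; rewrite eqn_leq; apply/andP; split.
  apply/bigmax_leqP => k; rewrite /pbool; case: excluded_middle_informative => // h _.
  exact: split_upper h.
have hp : pbool (splits_k M (ess_set s S) (Ordinal rlt)).
  rewrite /pbool; case: excluded_middle_informative => // nP; exfalso; apply: nP.
  exact: split_lower.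
exact: (leq_bigmax_cond (F := fun k : 'I_ _ => (k : nat)) (Ordinal rlt) hp).
Qed.
End Split.
Section Geo.
Variables m n : nat.
Definition rect (i j : gvert m n) : {set gvert m n} := [set z | gle i z && gle z j].

Lemma rect_ess s (i j : gvert m n) : gle i j ->
  [/\ i \in ess_set s (rect i j), j \in ess_set s (rect i j) &
      forall x, x \in ess_set s (rect i j) -> gle i x && gle x j].
Proof.
move=> ij.
have iS : i \in rect i j by rewrite inE ij /gle !leqnn.
have jS : j \in rect i j by rewrite inE ij /gle !leqnn.
have iso : i \in sources (rect i j).
  rewrite inE iS /=; apply/forallP => y; apply/implyP; rewrite inE /gle /garr.
  by move=> /andP[/andP[h1 h2] _]; apply/negP; lia.
have jsi : j \in sinks (rect i j).
  rewrite inE jS /=; apply/forallP => y; apply/implyP; rewrite inE /gle /garr.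
  by move=> /andP[_ /andP[h1 h2]]; apply/negP; lia.
have iss : i \in ess_ss (rect i j) by rewrite inE iso.
have jss : j \in ess_ss (rect i j) by rewrite inE jsi orbT.
have sub : ess_ss (rect i j) \subset rect i j.
  by apply/subsetP => x; rewrite !inE => /orP[] /andP[].
case: s => /=; split => //.
- by move=> x /(subsetP sub); rewrite inE.
- rewrite inE iS; apply/existsP; exists i; rewrite iss; apply/existsP; exists i.
  by rewrite iss !eqxx.
- rewrite inE jS; apply/existsP; exists j; rewrite jss; apply/existsP; exists j.
  by rewrite jss !eqxx.
- by move=> x; rewrite !inE => /andP[].
- by move=> x; rewrite inE.
Qed.

Lemma interval_rect (I : {set gvert m n}) (i j : gvert m n) :
  is_interval I -> gle i j -> (i \in I) && (j \in I) = (rect i j \subset I).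
Proof.
move=> /and3P[_ _ conv] ij; apply/andP/subsetP => [[iI jI] x|sub].
  rewrite inE => /andP[ix xj].
  have := forall_inP conv i iI => /forall_inP /(_ j jI) /forallP /(_ x) /implyP.
  by apply; rewrite ix xj.
by split; apply: sub; rewrite inE ij /gle !leqnn ?andbT.
Qed.

Lemma rect_interval (i j : gvert m n) : gle i j -> is_interval (rect i j).
Proof.
case: i => i1 i2; case: j => j1 j2 => ij; set S := rect _ _.
have iS : (i1, i2) \in S by rewrite inE ij /gle !leqnn.
set e := (fun a b => [&& a \in S, b \in S & garr a b || garr b a]).
have esym : connect_sym e.
  apply: sym_connect_sym => a b; rewrite /e; do 2 case: (_ \in S) => //=; exact: orbC.
have conn : forall d x, x \in S -> (x.1 - i1 + (x.2 - i2))%N = d -> connect e (i1, i2) x.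
  elim=> [|d IH] [a b] xS; have := xS; rewrite inE /gle /= => /andP[/andP[h1 h2] /andP[h3 h4]] /= hd.
    have -> : (a, b) = (i1, i2).
      by congr pair; apply: val_inj => /=; lia.
    exact: connect0.
  case: (ltnP i2 b) => hb.
    have lt : (b.-1 < n)%N by apply: leq_ltn_trans (leq_pred _) (ltn_ord _).
    pose y : gvert m n := (a, Ordinal lt).
    have yS : y \in S by rewrite inE /gle /y /= -!subn1; apply/and3P; split; try apply/andP; try split; lia.
    apply: (connect_trans (IH y yS _)); first by rewrite /y /= -!subn1; lia.
    apply: connect1; rewrite /e yS xS /= /garr /y /= -!subn1; apply/orP; left; apply/orP; left; apply/andP; split; lia.
  have lt : (a.-1 < m)%N by apply: leq_ltn_trans (leq_pred _) (ltn_ord _).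
  pose y : gvert m n := (Ordinal lt, b).
  have yS : y \in S by rewrite inE /gle /y /= -!subn1; apply/and3P; split; try apply/andP; try split; lia.
  apply: (connect_trans (IH y yS _)); first by rewrite /y /= -!subn1; lia.
  apply: connect1; rewrite /e yS xS /= /garr /y /= -!subn1; apply/orP; left; apply/orP; right; apply/andP; split; lia.
apply/and3P; split.
- by apply/set0Pn; exists (i1, i2).
- apply/forall_inP => x xS; apply/forall_inP => y yS.
  apply: (connect_trans (y := (i1, i2))); last exact: conn.
  by rewrite esym; exact: conn.
- apply/forall_inP => -[x1 x2] xS; apply/forall_inP => -[y1 y2] yS; apply/forallP => -[z1 z2]; apply/implyP.
  move: xS yS; rewrite !inE /gle /=.
  move=> /andP[/andP[? ?] /andP[? ?]] /andP[/andP[? ?] /andP[? ?]] /andP[/andP[? ?] /andP[? ?]].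
  by apply/andP; split; apply/andP; split; lia.
Qed.
End Geo.
Lemma rank_ones (K : fieldType) p q (B : 'M[K]_(p, q)) :
  (p <= 1)%N -> (q <= 1)%N -> (forall a b, B a b = 1) -> \rank B = minn p q.
Proof.
case: p B => [|[|p]] B // _; first by move=> _ _; rewrite min0n; apply/eqP; rewrite -leqn0 rank_leq_row.
case: q B => [|[|q]] B // _; first by move=> _; rewrite minn0; apply/eqP; rewrite -leqn0 rank_leq_col.
move=> hB; apply/eqP; rewrite eqn_leq rank_leq_row lt0n mxrank_eq0 /=.
apply/eqP => B0; have := hB ord0 ord0; rewrite B0 mxE => /eqP; by rewrite eq_sym oner_eq0.
Qed.

Lemma rank_VI (K : fieldType) m n (I : {set gvert m n}) (i j : gvert m n) :
  gle i j -> \rank (VImx K I i j) = ((i \in I) && (j \in I)).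
Proof.
move=> ij; rewrite rank_ones ?leq_b1 //; last by move=> a b; rewrite mxE ij.
by case: (i \in I); case: (j \in I).
Qed.

Theorem mainTheorem15 (K : fieldType) (m n : nat) (Hm : (0 < m)%N) (Hn : (0 < n)%N)
    (M : rep K m n) (s : ess) (i j : gvert m n) (Hij : gle i j) :
  (\sum_(I : {set gvert m n} | is_interval I)
      dtilde M s I * (\rank (VImx K I i j))%:Z
  = (\rank (rmor M i j))%:Z)%R.
Proof.
have iS := rect_interval Hij.
set S := rect i j in iS *.
have -> : \sum_(I : {set gvert m n} | is_interval I) dtilde M s I * (\rank (VImx K I i j))%:Z
  = \sum_(I | is_interval I) \sum_(J | is_interval J)
       (if S \subset I then mobius I J else 0) * (dbar M s J)%:Z.
  apply: eq_bigr => I iI; rewrite rank_VI // interval_rect // -/S.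
  case SI: (S \subset I).
    rewrite (_ : (true : nat)%:Z = 1) // mulr1.
    rewrite /dtilde big_mkcondr /=; apply: eq_bigr => J _.
    by case: ifP => // IJ; rewrite mobius0 ?IJ // mul0r.
  by rewrite (_ : (false : nat)%:Z = 0) // mulr0 big1 // => J _; rewrite mul0r.
rewrite exchange_big /=.
rewrite (eq_bigr (fun J => (S == J)%:R * (dbar M s J)%:Z)); last first.
  by move=> J iJ; rewrite -mulr_suml mobius_right.
rewrite (bigD1 S) //= eqxx mul1r big1 ?addr0; last first.
  by move=> J /andP[_ nJ]; rewrite eq_sym (negbTE nJ) mul0r.
have [hi hj hx] := rect_ess s Hij.
by rewrite (dbar_eq M Hij hi hj hx).
Qed.
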